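(* Let $m\in\mathbb{N}$ and $\rho\in[2,m-1]$. Then $$t_\rho(\mathbb{Z}_m)=\left\lfloor\frac{m-2}{\rho-1}\right\rfloor+1,\qquad s_\rho(\mathbb{Z}_m)=\max\left\{\frac md\left(\left\lfloor\frac{d-2}{\rho-1}\right\rfloor+1\right): d\mid m,\ d\ge\rho+1\right\}.$$
   Context: Groups are written additively; $\mathbb{Z}_m=\mathbb{Z}/m\mathbb{Z}$. For $A\subseteq G$ let $A_0:=A\cup\{0\}$ and $\langle A\rangle^+_\rho:=\rho A_0=\{a_1+\dots+a_\rho:a_i\in A_0\}$. $\operatorname{diam}^+_A(G):=\min\{\rho\in\mathbb{N}_0:\langle A\rangle^+_\rho=G\}$ ($\min\varnothing=\infty$). The period of $S\subseteq G$ is $\pi(S):=\{g\in G:S+g=S\}$; $S$ is aperiodic if $\pi(S)=\{0\}$. A subset $A\subseteq G$ is $\rho$-maximal if it is maximal under inclusion subject to $\operatorname{diam}^+_A(G)\ge\rho$, i.e. subject to $\langle A\rangle^+_{\rho-1}\neq G$. With the convention $\max\varnothing=0$: $s_\rho(G):=\max\{|A|: A\subseteq G,\ \rho\le\operatorname{diam}^+_A(G)<\infty\}$ and $t_\rho(G):=\max\{|A|: A \text{ is an aperiodic } \rho\text{-maximal generating set for } G\}$. *)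

(* Defs.v *)
From HB Require Import structures.
From mathcomp Require Import all_boot all_order all_algebra all_fingroup.
From Stdlib Require Import ClassicalEpsilon.
Set Implicit Arguments. Unset Strict Implicit. Unset Printing Implicit Defensive.
Import GRing.Theory.

Section Defs.
Variable m : nat.
Local Notation G := 'Z_m.

Definition A0 (A : {set G}) : {set G} := A :|: [set 0%R].

Definition sumset (S T : {set G}) : {set G} := [set (x + y)%R | x in S, y in T].

Definition rsum (A : {set G}) (rho : nat) : {set G} :=
  iter rho (fun S => sumset S (A0 A)) [set 0%R].

(* diam^+_A(G) >= rho, where diam = min {rho | <A>_rho = G}, min ∅ = ∞ *)
Definition diam_ge (A : {set G}) (rho : nat) : bool :=
  [forall n : 'I_rho, rsum A n != [set: G]].

Definition diam_fin (A : {set G}) : Prop := exists n, rsum A n = [set: G].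

Definition diam_finb (A : {set G}) : bool :=
  if excluded_middle_informative (diam_fin A) then true else false.

Definition period (S : {set G}) : {set G} :=
  [set g | [set (x + g)%R | x in S] == S].

Definition aperiodic (S : {set G}) : bool := period S == [set 0%R].

Definition rho_maximal (rho : nat) (A : {set G}) : bool :=
  maxset (fun B => diam_ge B rho) A.

Definition generating (A : {set G}) : bool := (<<A>>%g == [set: G]).

(* s_rho(G) = max{|A| : rho <= diam < ∞}, max ∅ = 0 *)
Definition s_rho (rho : nat) : nat :=
  \max_(A : {set G} | diam_ge A rho && diam_finb A) #|A|.

Definition t_rho (rho : nat) : nat :=
  \max_(A : {set G} | [&& aperiodic A, rho_maximal rho A & generating A]) #|A|.
End Defs.

(* Main.v *)
Require Import Defs.
From mathcomp Require Import all_boot all_order all_algebra all_fingroup.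
From Stdlib Require Import Lia ClassicalEpsilon.
Ltac ssrlia :=
  repeat match goal with H : is_true (leq _ _) |- _ => move/leP: H => H end;
  try apply/leP;
  repeat match goal with H : context [addn] |- _ => rewrite -plusE in H end;
  repeat match goal with H : context [muln] |- _ => rewrite -multE in H end;
  repeat match goal with H : context [subn] |- _ => rewrite subnE in H end;
  rewrite -?plusE -?multE ?subnE; lia.
Set Implicit Arguments. Unset Strict Implicit. Unset Printing Implicit Defensive.
Import GRing.Theory.

Section Kneser.
Variable m : nat.
Local Notation G := 'Z_m.
Local Open Scope ring_scope.
Implicit Types (A B S T X Y : {set G}) (g x y z : G).

Definition tr (S : {set G}) (g : G) : {set G} := [set x + g | x in S].

Lemma card_tr S g : #|tr S g| = #|S|.
Proof. by rewrite card_imset //; apply: addIr. Qed.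

Lemma mem_tr S g x : (x \in tr S g) = (x - g \in S).
Proof.
apply/imsetP/idP => [[y yS ->]|xS]; first by rewrite addrK.
by exists (x - g) => //; rewrite subrK.
Qed.

Lemma periodE S g : (g \in period S) = (tr S g == S).
Proof. by rewrite inE. Qed.

Lemma periodP S g : reflect (forall x, x \in S -> x + g \in S) (g \in period S).
Proof.
rewrite periodE; apply: (iffP idP) => [/eqP E x xS|H].
  by rewrite -E; apply/imsetP; exists x.
rewrite eqEcard card_tr leqnn andbT; apply/subsetP => y /imsetP[x xS ->].
exact: H.
Qed.

Lemma period0 S : 0 \in period S.
Proof. by apply/periodP => x; rewrite addr0. Qed.

Lemma periodD S g h : g \in period S -> h \in period S -> g + h \in period S.
Proof.
move=> /periodP Hg /periodP Hh; apply/periodP => x xS.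
by rewrite addrA; apply/Hh/Hg.
Qed.

Lemma periodN S g : g \in period S -> - g \in period S.
Proof.
move=> gP; have /eqP E := gP; rewrite periodE in gP.
apply/periodP => x xS.
have : x \in tr S g by rewrite (eqP gP).
by rewrite mem_tr.
Qed.

Lemma periodB S g h : g \in period S -> h \in period S -> g - h \in period S.
Proof. by move=> gP hP; apply/periodD/periodN. Qed.

Lemma mem_periodD S g x : g \in period S -> x \in S -> x + g \in S.
Proof. by move/periodP; apply. Qed.

Lemma mem_periodB S g x : g \in period S -> x \in S -> x - g \in S.
Proof. by move/periodN; exact: mem_periodD. Qed.

Lemma notin_periodD S g x : g \in period S -> x \notin S -> x + g \notin S.
Proof.
move=> gP; apply: contra => H.
by rewrite -(addrK g x); apply: mem_periodB.
Qed.

Definition vv (S : {set G}) := (#|S| + #|period S|)%N.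

Definition cross S T z := [set s + t - z | s in S, t in T].

Lemma card_cross (X Y S T : {set G}) z :
  S \subset tr (period X) z -> T \subset tr (period Y) z ->
  S != set0 -> T != set0 ->
  (#|S| + #|T| <= #|cross S T z| + #|period X :&: period Y|)%N.
Proof.
move=> sS sT /set0Pn[s0 s0S] /set0Pn[t0 t0T].
rewrite /cross; set W := [set _ | s in S, t in T].
pose U1 := tr S (t0 - z); pose U2 := tr T (s0 - z).
have sU1 : U1 \subset W.
  apply/subsetP => w /imsetP[s sS' ->]; apply/imset2P; exists s t0 => //.
  by rewrite addrA.
have sU2 : U2 \subset W.
  apply/subsetP => w /imsetP[t tT ->]; apply/imset2P; exists s0 t => //.
  by rewrite addrCA addrA.
pose c := s0 + t0 - z.
have sI : U1 :&: U2 \subset tr (period X :&: period Y) c.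
  apply/subsetP => w; rewrite inE => /andP[/imsetP[s sS' ->] /imsetP[t tT Et]].
  have E1 : s + (t0 - z) = (s - s0) + c by rewrite /c -addrA -(addrA s0) addKr.
  have E2 : t + (s0 - z) = (t - t0) + c.
    by rewrite /c (addrC s0 t0) -addrA -(addrA t0) addKr.
  rewrite mem_tr inE; apply/andP; split.
    rewrite E1 addrK.
    move: (subsetP sS s sS') (subsetP sS s0 s0S); rewrite !mem_tr => a b.
    have -> : s - s0 = (s - z) - (s0 - z) by rewrite opprB addrA subrK.
    exact: periodB.
  rewrite Et E2 addrK.
  move: (subsetP sT t tT) (subsetP sT t0 t0T); rewrite !mem_tr => a b.
  have -> : t - t0 = (t - z) - (t0 - z) by rewrite opprB addrA subrK.
  exact: periodB.
have := cardsUI U1 U2; rewrite !card_tr => E.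
have h1 : (#|U1 :|: U2| <= #|W|)%N by apply: subset_leq_card; rewrite subUset sU1.
have h2 := subset_leq_card sI; rewrite card_tr in h2.
by rewrite -E leq_add.
Qed.

Lemma cross_sub X Y z S T :
  z \in X ->
  S \subset tr (period X) z :\: Y -> T \subset tr (period Y) z :&: X ->
  cross S T z \subset X :\: Y.
Proof.
move=> zX sS sT; apply/subsetP => w /imset2P[s t sS' tT ->].
move: (subsetP sS s sS') (subsetP sT t tT).
rewrite !inE !mem_tr => /andP[sY hs] /andP[ht tX].
apply/andP; split.
  have -> : s + t - z = s + (t - z) by rewrite addrA.
  exact: notin_periodD.
have -> : s + t - z = t + (s - z) by rewrite addrA (addrC t).
exact: mem_periodD.
Qed.

Lemma key X Y x h : x \in X -> x \notin Y -> h \in period X -> x + h \in Y ->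
  (#|period Y| <= #|X :\: Y| + #|period X :&: period Y|)%N \/
  (#|period X| <= #|Y :\: X| + #|period X :&: period Y|)%N.
Proof.
move=> xX xY hP zY; set z := x + h.
have zX : z \in X by apply: mem_periodD.
set S := tr (period X) z :\: Y; set T0 := tr (period Y) z :&: X.
set S' := tr (period Y) z :\: X; set T' := tr (period X) z :&: Y.
have cS : (#|T'| + #|S| = #|period X|)%N by rewrite cardsID card_tr.
have cS' : (#|T0| + #|S'| = #|period Y|)%N by rewrite cardsID card_tr.
have xS : x \in S.
  by rewrite !inE xY /= mem_tr /z opprD addrA addrN add0r; apply: periodN.
have zT0 : z \in T0 by rewrite !inE zX andbT mem_tr subrr period0.
have zT' : z \in T' by rewrite !inE zY andbT mem_tr subrr period0.
case: (leqP #|S'| #|S|) => hSS.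
  left.
  have nS : S != set0 by apply/set0Pn; exists x.
  have nT : T0 != set0 by apply/set0Pn; exists z.
  have H := card_cross (subsetDl _ _) (subsetIl _ _) nS nT.
  have H2 := subset_leq_card (cross_sub zX (subxx S) (subxx T0)).
  rewrite -cS' addnC; apply: leq_trans (leq_add hSS (leqnn _)) _.
  by apply: leq_trans H _; rewrite leq_add2r.
right.
have nS : S' != set0 by rewrite -card_gt0; exact: leq_ltn_trans (leq0n _) hSS.
have nT : T' != set0 by apply/set0Pn; exists z.
have H := card_cross (subsetDl _ _) (subsetIl _ _) nS nT.
have H2 := subset_leq_card (cross_sub zY (subxx S') (subxx T')).
rewrite -cS addnC setIC; apply: leq_trans (leq_add (ltnW hSS) (leqnn _)) _.
by apply: leq_trans H _; rewrite leq_add2r.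
Qed.


Lemma cardU_D X Y : #|X :|: Y| = (#|X| + #|Y :\: X|)%N.
Proof.
apply: (@addIn #|X :&: Y|); rewrite cardsUI -(cardsID X Y) setIC.
by rewrite addnAC addnA.
Qed.

Lemma union_v X Y : (minn (vv X) (vv Y) <= vv (X :|: Y))%N.
Proof.
have sD : period X :&: period Y \subset period (X :|: Y).
  apply/subsetP => g; rewrite inE => /andP[gX gY]; apply/periodP => u.
  by rewrite !inE => /orP[uX|uY]; apply/orP; [left|right]; apply: mem_periodD.
have cD := subset_leq_card sD.
case: (boolP (X \subset Y)) => [sXY|nXY].
  by rewrite (setUidPr sXY) geq_minr.
case: (boolP (Y \subset X)) => [sYX|nYX].
  by rewrite (setUidPl sYX) geq_minl.
have [x xX xY] := subsetPn nXY; have [y yY yX] := subsetPn nYX.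
suff : (#|period Y| <= #|X :\: Y| + #|period X :&: period Y|)%N \/
  (#|period X| <= #|Y :\: X| + #|period X :&: period Y|)%N.
  case=> H.
    apply: leq_trans (geq_minr _ _) _.
    have E : #|X :|: Y| = (#|Y| + #|X :\: Y|)%N by rewrite setUC cardU_D.
    rewrite /vv E -addnA leq_add2l.
    by apply: (leq_trans H); rewrite leq_add2l.
  apply: leq_trans (geq_minl _ _) _; rewrite /vv cardU_D -addnA leq_add2l.
  by apply: (leq_trans H); rewrite leq_add2l.
case: (boolP [exists h in period X, x + h \in Y]) => [/exists_inP[h hP hY]|nx].
  exact: key xX xY hP hY.
have c1 : (#|period X| <= #|X :\: Y|)%N.
  rewrite -(card_tr _ x); apply: subset_leq_card; apply/subsetP => w.
  rewrite mem_tr => wP; rewrite inE; apply/andP; split.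
    apply: contra nx => wY; apply/exists_inP; exists (w - x) => //.
    by rewrite addrC subrK.
  by rewrite -(subrK x w) addrC; apply: mem_periodD.
case: (boolP [exists h in period Y, y + h \in X]) => [/exists_inP[h hP hX]|ny].
  by have [H|H] := key yY yX hP hX; [right|left]; rewrite setIC.
have c2 : (#|period Y| <= #|Y :\: X|)%N.
  rewrite -(card_tr _ y); apply: subset_leq_card; apply/subsetP => w.
  rewrite mem_tr => wP; rewrite inE; apply/andP; split.
    apply: contra ny => wX; apply/exists_inP; exists (w - y) => //.
    by rewrite addrC subrK.
  by rewrite -(subrK y w) addrC; apply: mem_periodD.
case: (leqP #|period X| #|period Y|) => hl.
  by right; apply: leq_trans (leq_addr _ _); apply: leq_trans hl c2.
by left; apply: leq_trans (leq_addr _ _); apply: leq_trans (ltnW hl) c1.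
Qed.


Lemma kneser A B : A != set0 -> B != set0 -> (#|A| + #|B| <= vv (sumset A B))%N.
Proof.
move: {2}#|B| (leqnn #|B|) => n; elim: n A B => [|n IH] A B.
  by rewrite leqn0 cards_eq0 => /eqP -> _; rewrite eqxx.
move=> leB nA nB.
case: (boolP [exists b in B, [forall a in A, [forall b' in B, a + b' - b \in A]]]).
  case/exists_inP => b bB /forall_inP H.
  have E : sumset A B = tr A b.
    apply/setP => w; apply/imset2P/imsetP.
      case=> a b' aA b'B ->; exists (a + b' - b); last by rewrite subrK.
      exact: (forall_inP (H a aA)) b' b'B.
    by case=> a aA ->; exists a b.
  have sP : tr B (- b) \subset period (sumset A B).
    apply/subsetP => g /imsetP[b' b'B ->]; rewrite E; apply/periodP => w.
    rewrite !mem_tr => wA.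
    have -> : w + (b' + - b) - b = (w - b) + b' - b by rewrite addrA (addrAC w).
    exact: (forall_inP (H _ wA)) b' b'B.
  rewrite /vv -(card_tr B (- b)); apply: leq_add; last exact: subset_leq_card.
  by rewrite E card_tr.
move=> nH.
have Hb : forall b, b \in B -> exists e, (b + e \in A) && ~~ (tr B e \subset A).
  move=> b bB; move: nH; rewrite negb_exists_in => /forall_inP/(_ b bB).
  rewrite negb_forall_in => /exists_inP[a aA]; rewrite negb_forall_in.
  case/exists_inP => b' b'B H; exists (a - b); rewrite addrC subrK aA /=.
  apply/subsetPn; exists (b' + (a - b)); first by apply/imsetP; exists b'.
  by rewrite addrCA addrA.
pose P b e := (b + e \in A) && ~~ (tr B e \subset A).
pose e b := odflt 0 [pick e | P b e].
have He : forall b, b \in B -> P b (e b).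
  move=> b bB; rewrite /e; case: pickP => [x //|H0].
  by have [x /andP[x1 x2]] := Hb b bB; move: (H0 x); rewrite /P x1 x2.
pose Bb b := [set y in B | y + e b \in A].
pose F b := sumset (A :|: tr B (e b)) (Bb b).
have FC : sumset A B = \bigcup_(b in B) F b.
  apply/setP => w; apply/imset2P/bigcupP.
    case=> a b aA bB ->; exists b => //; apply/imset2P; exists a b => //.
      by rewrite inE aA.
    by rewrite inE bB; case/andP: (He b bB).
  case=> b bB /imset2P[u v]; rewrite !inE => /orP[uA|uT] /andP[vB vA] ->.
    by exists u v.
  exists (v + e b) (u - e b) => //; first by rewrite -mem_tr.
  by rewrite -addrA (addrCA (e b)) subrr addr0 addrC.
have FV : forall b, b \in B -> (#|A| + #|B| <= vv (F b))%N.
  move=> b bB; have /andP[bA nsub] := He b bB.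
  have E1 : A :&: tr B (e b) = tr (Bb b) (e b).
    apply/setP => w; rewrite inE !mem_tr inE subrK.
    by rewrite andbC.
  have cE : (#|A :|: tr B (e b)| + #|Bb b| = #|A| + #|B|)%N.
    by rewrite -(card_tr (Bb b) (e b)) -E1 cardsUI card_tr.
  rewrite -cE; apply: IH.
  - have : Bb b \proper B.
      rewrite properEneq; apply/andP; split.
        apply/negP => /eqP EB; apply: (negP nsub); apply/subsetP => w.
        by rewrite -EB mem_tr inE subrK => /andP[].
      by apply/subsetP => y; rewrite inE => /andP[].
    by move/proper_card => H; rewrite -ltnS; apply: leq_trans H leB.
  - by apply/set0Pn; case/set0Pn: nA => a aA; exists a; rewrite inE aA.
  - by apply/set0Pn; exists b; rewrite inE bB.
have : (\bigcup_(b in B) F b == set0) || (#|A| + #|B| <= vv (\bigcup_(b in B) F b))%N.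
  apply: (big_ind (fun U => (U == set0) || (#|A| + #|B| <= vv U))%N).
  - by rewrite eqxx.
  - move=> U1 U2 /orP[/eqP->|h1]; first by rewrite set0U.
    move=> /orP[/eqP->|h2]; first by rewrite setU0 h1 orbT.
    by rewrite (leq_trans _ (union_v U1 U2)) ?orbT // leq_min h1 h2.
  - by move=> b bB; rewrite FV ?orbT.
rewrite -FC => /orP[|//].
case/set0Pn: nA => a aA; case/set0Pn: nB => b bB => /eqP E.
have : a + b \in sumset A B by apply/imset2P; exists a b.
by rewrite E inE.
Qed.


Lemma rsumS A n : rsum A n.+1 = sumset (rsum A n) (A0 A).
Proof. by []. Qed.

Lemma mem0_A0 A : 0 \in A0 A.
Proof. by rewrite !inE eqxx orbT. Qed.

Lemma mem0_rsum A n : 0 \in rsum A n.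
Proof.
elim: n => [|n IH]; first by rewrite /rsum /= inE.
by rewrite rsumS; apply/imset2P; exists 0 0 => //; [exact: mem0_A0 | rewrite addr0].
Qed.

Lemma rsum_subS A n : rsum A n \subset rsum A n.+1.
Proof.
apply/subsetP => x xR; rewrite rsumS; apply/imset2P; exists x 0 => //.
  exact: mem0_A0.
by rewrite addr0.
Qed.

Lemma rsum_mono A n k : (n <= k)%N -> rsum A n \subset rsum A k.
Proof.
move=> /subnK <-; elim: (k - n)%N => [|j IH]; first by rewrite add0n.
by rewrite addSn; apply: subset_trans IH (rsum_subS _ _).
Qed.

Lemma period_sumset S T : period S \subset period (sumset S T).
Proof.
apply/subsetP => g gP; apply/periodP => w /imset2P[x y xS yT ->].
apply/imset2P; exists (x + g) y => //; first exact: mem_periodD.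
by rewrite addrAC.
Qed.

Lemma period_rsum_mono A n k : (n <= k)%N ->
  period (rsum A n) \subset period (rsum A k).
Proof.
move=> /subnK <-; elim: (k - n)%N => [|j IH]; first by rewrite add0n.
by rewrite addSn; apply: subset_trans IH _; rewrite rsumS; apply: period_sumset.
Qed.

Lemma diam_geE A h : diam_ge A h.+1 = (rsum A h != setT).
Proof.
apply/forallP/idP => [H|H n]; first exact: (H (Ordinal (ltnSn h))).
apply: contra H => /eqP E; rewrite eqEsubset subsetT /=.
by rewrite -E; apply: rsum_mono; rewrite -ltnS.
Qed.

Lemma chain A n k : (n <= k)%N ->
  (1 + n * #|A0 A| <= #|rsum A n| + n * #|period (rsum A k)|)%N.
Proof.
elim: n => [|n IH] lek; first by rewrite /rsum /= cards1.
have := IH (ltnW lek).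
have nR : rsum A n != set0 by apply/set0Pn; exists 0; apply: mem0_rsum.
have nA : A0 A != set0 by apply/set0Pn; exists 0; apply: mem0_A0.
have K := kneser nR nA; rewrite -rsumS /vv in K.
have cP := subset_leq_card (period_rsum_mono A lek).
move=> H; rewrite !mulSn.
rewrite addnCA (addnC #|A0 A|); apply: leq_trans (leq_add H (leqnn _)) _.
rewrite addnAC; apply: leq_trans (leq_add K (leqnn _)) _.
by rewrite -addnA leq_add2l leq_add2r.
Qed.


Lemma rsum_A0 A n : rsum (A0 A) n = rsum A n.
Proof. by rewrite /rsum /A0 -setUA setUid. Qed.

Lemma rsum_sumset_period A S n :
  rsum (sumset A (period S)) n \subset sumset (rsum A n) (period S).
Proof.
elim: n => [|n IH].
  apply/subsetP => x; rewrite /rsum /= inE => /eqP ->.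
  apply/imset2P; exists 0 0; [by rewrite inE | exact: period0 | by rewrite addr0].
apply/subsetP => w; rewrite rsumS => /imset2P[x y xR yA ->].
have [x' p xR' pP ->] := imset2P (subsetP IH x xR).
have [y' yA' [q qP Ey]] : exists2 y', y' \in A0 A & exists2 q, q \in period S & y = y' + q.
  move: yA; rewrite !inE => /orP[/imset2P[a q aA qP ->]|/eqP ->].
    by exists a; rewrite ?inE ?aA //; exists q.
  by exists 0; [exact: mem0_A0 | exists 0; rewrite ?addr0 //; exact: period0].
apply/imset2P; exists (x' + y') (p + q).
- by rewrite rsumS; apply/imset2P; exists x' y'.
- exact: periodD.
by rewrite Ey addrACA.
Qed.

Lemma maxfacts h B : rho_maximal h.+1 B ->
  [/\ 0 \in B, period (rsum B h) \subset period B & rsum B h != setT].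
Proof.
case/maxsetP => dB maxB; rewrite diam_geE in dB.
have B0 : A0 B = B.
  by apply: maxB; [rewrite diam_geE rsum_A0 | apply: subsetUl].
split => //; first by rewrite -B0; exact: mem0_A0.
set P := period (rsum B h).
have sB : B \subset sumset B P.
  apply/subsetP => x xB; apply/imset2P; exists x 0 => //; [exact: period0 | by rewrite addr0].
have E : sumset B P = B.
  apply: maxB => //; rewrite diam_geE; apply: contra dB => /eqP E.
  rewrite eqEsubset subsetT /= -E; apply: subset_trans (rsum_sumset_period _ _ _) _.
  apply/subsetP => w /imset2P[x p xR pP ->]; exact: mem_periodD.
apply/subsetP => g gP; apply/periodP => x xB; rewrite -E.
by apply/imset2P; exists x g.
Qed.


Lemma card_G : (1 < m)%N -> #|G| = m.
Proof. by move=> m1; rewrite card_ord Zp_cast. Qed.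

Lemma card_lt_setT S : (1 < m)%N -> S != setT -> (#|S| < m)%N.
Proof.
move=> m1 nS; apply: (@leq_trans #|G|); last by rewrite (card_G m1).
by rewrite -cardsT; apply: proper_card; rewrite properT.
Qed.

Lemma t_upper h B : (0 < h)%N -> (1 < m)%N -> rho_maximal h.+1 B -> aperiodic B ->
  (#|B| <= (m - 2) %/ h + 1)%N.
Proof.
move=> h0 m1 mB /eqP aB.
have [B0 sP nR] := maxfacts mB.
have := chain B (leqnn h).
have -> : A0 B = B by apply/setUidPl; rewrite sub1set.
have cP : (#|period (rsum B h)| <= 1)%N.
  by rewrite -(cards1 (0 : G)) -aB; apply: subset_leq_card.
have cR := card_lt_setT m1 nR.
move=> H.
have cP' : (h * #|period (rsum B h)| <= h)%N.
  by apply: leq_trans (leq_mul (leqnn h) cP) _; rewrite muln1.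
rewrite addnC -leq_subLR leq_divRL //.
rewrite mulnBl mul1n (mulnC #|B|).
move: (h * #|B|) (h * #|period (rsum B h)|) H cP' => X Y H cP'; ssrlia.
Qed.

Lemma dvd_period S X : (forall x g, x \in X -> g \in period S -> x + g \in X) ->
  (#|period S| %| #|X|)%N.
Proof.
move: {2}#|X| (leqnn #|X|) => n; elim: n X => [|n IH] X.
  by rewrite leqn0 cards_eq0 => /eqP -> _; rewrite cards0 dvdn0.
move=> leX HX; case: (eqVneq X set0) => [->|/set0Pn[x xX]]; first by rewrite cards0 dvdn0.
set C := tr (period S) x.
have sC : C \subset X.
  by apply/subsetP => w; rewrite mem_tr => wP; rewrite -(subrK x w) addrC HX.
have E : #|X| = (#|X :\: C| + #|period S|)%N.
  by rewrite -{1}(cardsID C X) (setIidPr sC) addnC card_tr.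
rewrite E dvdn_addl // IH //.
- have p0 : (0 < #|period S|)%N.
    by rewrite card_gt0; apply/set0Pn; exists 0; exact: period0.
  by move: leX; rewrite E => leX; ssrlia.
- move=> y g yXC gP; move: yXC; rewrite inE => /andP[yC yX].
  rewrite inE (HX _ _ yX gP) andbT.
  apply: contra yC; rewrite !mem_tr => H.
  by have := periodB H gP; rewrite addrAC addrK.
Qed.


Lemma rsum_subA A B n : A \subset B -> rsum A n \subset rsum B n.
Proof.
move=> sAB; elim: n => [|n IH]; first exact: subxx.
apply/subsetP => w; rewrite !rsumS => /imset2P[x y xR yA ->].
apply/imset2P; exists x y; first exact: (subsetP IH).
  by move: yA; rewrite !inE => /orP[/(subsetP sAB)->|->]; rewrite ?orbT.
by [].
Qed.

Lemma rsum_sub_period A S n : A \subset period S -> rsum A n \subset period S.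
Proof.
move=> sA; elim: n => [|n IH].
  by apply/subsetP => x; rewrite /rsum /= inE => /eqP ->; exact: period0.
apply/subsetP => w; rewrite rsumS => /imset2P[x y xR yA ->].
apply: periodD; first exact: (subsetP IH).
by case/setUP: yA => [/(subsetP sA)//|/set1P ->]; exact: period0.
Qed.

Lemma s_upper h A : (0 < h)%N -> (1 < m)%N -> diam_ge A h.+1 ->
  (exists n, rsum A n = setT) ->
  exists d, [/\ (d %| m)%N, (h.+2 <= d)%N, (d <= m)%N &
                (#|A| <= m %/ d * ((d - 2) %/ h + 1))%N].
Proof.
move=> h0 m1 dA [n0 Rn0].
have [B mB sAB] := @maxset_exists _ (fun B : {set G} => diam_ge B h.+1) A dA.
have [B0 sP nR] := maxfacts mB.
set P := period (rsum B h) in sP.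
have dB : (#|P| %| #|B|)%N.
  by apply: dvd_period => x g xB gP; apply: mem_periodD (subsetP sP g gP) xB.
have dG : (#|P| %| m)%N.
  suff : (#|P| %| #|[set: G]|)%N by rewrite cardsT card_G.
  by apply: dvd_period => x g; rewrite !inE.
have dR : (#|P| %| #|rsum B h|)%N.
  by apply: dvd_period => x g xR gP; apply: mem_periodD.
have cR := card_lt_setT m1 nR.
have := chain B (leqnn h).
have -> : A0 B = B by apply/setUidPl; rewrite sub1set.
rewrite -/P => H.
have sPB : P \subset B.
  by apply/subsetP => g gP; rewrite -(add0r g); apply: mem_periodD (subsetP sP g gP) B0.
have lBP : (#|P| < #|B|)%N.
  rewrite ltnNge; apply/negP => le; have EB : P = B by apply/eqP; rewrite eqEcard sPB.
  have : rsum A n0 \subset P.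
    by apply: subset_trans (rsum_subA n0 sAB) _; apply: rsum_sub_period; rewrite -/P EB.
  rewrite Rn0 => sTP; apply: (negP nR); rewrite eqEsubset subsetT /=.
  apply/subsetP => g _; rewrite -(add0r g); apply: mem_periodD (mem0_rsum _ _).
  by apply: (subsetP sTP); rewrite inE.
have c0 : (0 < #|P|)%N by rewrite card_gt0; apply/set0Pn; exists 0; exact: period0.
case/dvdnP: dB => k Ek; case/dvdnP: dG => d Ed; case/dvdnP: dR => r Er.
have lAB := subset_leq_card sAB.
rewrite Ek Er in H cR lBP lAB.
have rd : (r < d)%N by rewrite -(ltn_pmul2r c0) -Ed.
have k2 : (1 < k)%N by rewrite -(ltn_pmul2r c0) mul1n.
have hk : (h * k < d - 1 + h)%N.
  rewrite -(ltn_pmul2r c0) mulnDl -mulnA.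
  apply: leq_trans H _; rewrite leq_add2r leq_mul2r.
  by apply/orP; right; ssrlia.
have hk' : (h * (k - 1) <= d - 2)%N by rewrite mulnBr muln1; ssrlia.
have hd : (h.+2 <= d)%N.
  have : (h <= h * (k - 1))%N by rewrite leq_pmulr // subn_gt0.
  by move=> hh; ssrlia.
exists d; split.
- by rewrite Ed; apply/dvdn_mulr/dvdnn.
- exact: hd.
- by rewrite Ed leq_pmulr.
have d0 : (0 < d)%N by apply: leq_trans hd.
have -> : (m %/ d = #|P|)%N by rewrite [in LHS]Ed mulKn.
apply: leq_trans lAB _; rewrite mulnC leq_mul2l; apply/orP; right.
by rewrite addnC -leq_subLR leq_divRL // mulnC.
Qed.


Section Concrete.
Hypothesis m1 : (1 < m)%N.

Lemma valE x : (val x)%:R = x.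
Proof. exact: natr_Zp. Qed.

Lemma val_nat i : val (i%:R : G) = (i %% m)%N.
Proof. exact: val_Zp_nat. Qed.

Lemma val_lt x : (val x < m)%N.
Proof. by have := ltn_ord x; rewrite [X in (_ < X)%N -> _](Zp_cast m1). Qed.

Lemma val_add x y : val (x + y) = ((val x + val y) %% m)%N.
Proof. by rewrite -{1}[x]valE -{1}[y]valE -natrD val_nat. Qed.

Definition Ad d k := [set x : G | (val x %% d < k)%N].

Lemma Ad_rsum d k n x : (d %| m)%N -> x \in rsum (Ad d k) n ->
  (val x %% d <= n * (k - 1))%N.
Proof.
move=> dm; elim: n x => [|n IH] x.
  by rewrite /rsum /= inE => /eqP ->; rewrite mod0n.
rewrite rsumS => /imset2P[y z yR zA ->].
rewrite val_add modn_dvdm // -modnDm mulSnr.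
apply: leq_trans (leq_mod _ _) _; apply: leq_add; first exact: IH.
move: zA; rewrite !inE => /orP[zA|/eqP ->]; last by rewrite mod0n.
by rewrite -ltnS; apply: leq_trans zA _; rewrite -add1n -leq_subLR.
Qed.

Lemma Ad_diam h d k : (0 < h)%N -> (d %| m)%N -> (h.+2 <= d)%N -> (d <= m)%N ->
  k = ((d - 2) %/ h + 1)%N -> diam_ge (Ad d k) h.+1.
Proof.
move=> h0 dm hd dle ->; rewrite diam_geE; apply/negP => /eqP E.
have : ((d - 1)%:R : G) \in rsum (Ad d ((d - 2) %/ h + 1)) h by rewrite E inE.
move=> /(Ad_rsum dm); rewrite val_nat (modn_small (m := d - 1)); last by ssrlia.
rewrite modn_small; last by ssrlia.
rewrite addnK => H; have := leq_divM (d - 2) h; rewrite mulnC => ?; ssrlia.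
Qed.

Lemma Ad_fin d k : (1 < d)%N -> (1 < k)%N -> rsum (Ad d k) m = setT.
Proof.
move=> d1 k1; have oneA : (1 : G) \in Ad d k.
  by rewrite inE -(mulr1n (1 : G)) val_nat !modn_small.
have H : forall i, (i%:R : G) \in rsum (Ad d k) i.
  elim=> [|i IH]; first by rewrite /rsum /= inE.
  rewrite rsumS; apply/imset2P; exists (i%:R) 1 => //; first by rewrite inE oneA.
  by rewrite mulrSr.
apply/eqP; rewrite eqEsubset subsetT /=; apply/subsetP => x _.
rewrite -[x]valE; apply: (subsetP (rsum_mono _ (ltnW (val_lt x)))); exact: H.
Qed.

Lemma Ad_card d k : (0 < d)%N -> (d %| m)%N -> (k <= d)%N ->
  #|Ad d k| = (m %/ d * k)%N.
Proof.
move=> d0 dm kd.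
pose f := fun p : 'I_(m %/ d) * 'I_k => (((p.1 : nat) * d + p.2)%:R : G).
have bound : forall p : 'I_(m %/ d) * 'I_k, ((p.1 : nat) * d + p.2 < m)%N.
  case=> [[a ha] [b hb]] /=.
  apply: (@leq_trans (a.+1 * d)); first by rewrite mulSnr ltn_add2l (leq_trans hb).
  by rewrite -[X in (_ <= X)%N](divnK dm) leq_mul2r ha orbT.
have finj : injective f.
  move=> [[a ha] [b hb]] [[a' ha'] [b' hb']] /(congr1 val).
  rewrite /f !val_nat !modn_small ?(bound (Ordinal ha, Ordinal hb))
    ?(bound (Ordinal ha', Ordinal hb')) //= => E.
  have bd : (b < d)%N by apply: leq_trans hb kd.
  have bd' : (b' < d)%N by apply: leq_trans hb' kd.
  have Ea : a = a'.
    have := congr1 (fun n => n %/ d)%N E.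
    by rewrite /= !divnMDl // !divn_small // !addn0.
  have Eb : b = b'.
    have := congr1 (fun n => n %% d)%N E.
    by rewrite /= !modnMDl !modn_small.
  subst a' b'; congr pair; exact: val_inj.
have -> : Ad d k = f @: setT.
  apply/setP => x; rewrite inE; apply/idP/imsetP.
    move=> xk.
    have qlt : (val x %/ d < m %/ d)%N.
      by rewrite ltn_divLR // divnK // val_lt.
    exists (Ordinal qlt, Ordinal xk) => //.
    by rewrite /f /= -divn_eq valE.
  case=> p _ ->; rewrite /f val_nat (modn_small (bound p)) modnMDl modn_small //.
  by apply: leq_trans (ltn_ord _) kd.
by rewrite card_imset // cardsT card_prod !card_ord.
Qed.

Lemma cover (R : {set G}) L g : (m <= L.*2.+1)%N ->
  (forall i, (i <= L)%N -> (i%:R : G) \in R) -> g \in period R -> g != 0 -> R = setT.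
Proof.
move=> mL HL gP gn0.
have vg0 : (0 < val g)%N.
  rewrite lt0n; apply: contra gn0 => /eqP v; apply/eqP/val_inj; rewrite v.
  by [].
have [g' [g'P v0 vL]] : exists g', [/\ g' \in period R, (0 < val g')%N & (val g' <= L.+1)%N].
  case: (leqP (val g) L.+1) => hg; first by exists g.
  have Eg : - g = (m - val g)%:R.
    apply: (addIr g); rewrite addNr -{2}[g]valE -natrD subnK ?pchar_Zp //.
    exact: ltnW (val_lt g).
  have vgm := val_lt g; rewrite -mul2n in mL.
  exists (- g); split; first exact: periodN.
    by rewrite Eg val_nat modn_small; ssrlia.
  by rewrite Eg val_nat modn_small; ssrlia.
have H : forall n i, (i <= L + n * val g')%N -> (i%:R : G) \in R.
  elim=> [|n IH] i; first by rewrite mul0n addn0; exact: HL.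
  case: (leqP i (L + n * val g')) => hi; first by move=> _; exact: IH.
  move=> hi2; have vi : (val g' <= i)%N by ssrlia.
  have -> : (i%:R : G) = (i - val g')%:R + g' by rewrite -{2}[g']valE -natrD subnK.
  apply: mem_periodD g'P _; apply: IH; rewrite mulSnr in hi2; ssrlia.
apply/eqP; rewrite eqEsubset subsetT /=; apply/subsetP => x _.
rewrite -[x]valE; apply: (H m); have := val_lt x.
have : (m <= m * val g')%N by rewrite leq_pmulr.
by move=> ? ?; ssrlia.
Qed.

Lemma period_sumsetr S T : period T \subset period (sumset S T).
Proof.
apply/subsetP => g gP; apply/periodP => w /imset2P[x y xS yT ->].
apply/imset2P; exists x (y + g) => //; first exact: mem_periodD.
by rewrite addrA.
Qed.

Lemma Am_int k n i : (0 < k)%N -> (k <= m)%N -> (i <= n * (k - 1))%N -> (i%:R : G) \in rsum (Ad m k) n.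
Proof.
move=> k0 km; elim: n i => [|n IH] i.
  by rewrite mul0n leqn0 => /eqP ->; rewrite /rsum /= inE.
move=> hi; rewrite rsumS.
have inA : forall r, (r <= k - 1)%N -> (r%:R : G) \in A0 (Ad m k).
  move=> r hr; apply/setUP; left; rewrite inE val_nat !modn_small; ssrlia.
case: (leqP i (k - 1)) => hik.
  apply/imset2P; exists 0 (i%:R); [exact: mem0_rsum | exact: inA | by rewrite add0r].
apply/imset2P; exists ((i - (k - 1))%:R) ((k - 1)%:R).
- by apply: IH; rewrite mulSnr in hi; ssrlia.
- exact: inA.
by rewrite -natrD subnK // ltnW.
Qed.

Lemma t_lower h : (0 < h)%N -> (h.+2 <= m)%N ->
  exists B, [&& aperiodic B, rho_maximal h.+1 B & generating B] &&
            ((m - 2) %/ h + 1 <= #|B|)%N.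
Proof.
move=> h0 hm; set k := ((m - 2) %/ h + 1)%N.
have q1 : (1 <= (m - 2) %/ h)%N by rewrite leq_divRL // mul1n; ssrlia.
have km : (k <= m)%N.
  by rewrite /k; have := leq_div (m - 2) h => ?; ssrlia.
have k0 : (0 < k)%N by rewrite /k addn1.
have dI : diam_ge (Ad m k) h.+1 by apply: Ad_diam => //; exact: dvdnn.
have [B mB sIB] := @maxset_exists _ (fun B : {set G} => diam_ge B h.+1) _ dI.
have [B0 _ nR] := maxfacts mB.
have oneB : (1 : G) \in B.
  apply: (subsetP sIB); rewrite inE -(mulr1n (1 : G)) val_nat !modn_small //.
  by rewrite /k; ssrlia.
exists B; apply/andP; split; last first.
  apply: leq_trans _ (subset_leq_card sIB); rewrite Ad_card ?dvdnn ?(ltnW m1) //.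
  by rewrite divnn (ltnW m1) mul1n.
have mB2 : rho_maximal h.+1 B := mB.
rewrite mB2 /=; apply/andP; split; last first.
  rewrite /generating eqEsubset subsetT /=.
  by rewrite Zp_cycle cycle_subG mem_gen.
rewrite /aperiodic eqEsubset sub1set period0 andbT.
apply/subsetP => g gP; rewrite inE; apply/negPn/negP => gn0.
apply: (negP nR); apply/eqP.
apply: (cover (L := h * (k - 1)) (g := g)).
- rewrite /k addnK -mul2n (mulnC h).
  have := divn_eq (m - 2) h; have := ltn_pmod (m - 2) h0.
  have : (h <= (m - 2) %/ h * h)%N by rewrite leq_pmull.
  move: ((m - 2) %/ h * h)%N ((m - 2) %% h)%N => X Y ? ? ?; ssrlia.
- move=> i hi; apply: (subsetP (rsum_subA _ sIB)); exact: Am_int.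
- apply: (subsetP (period_rsum_mono B h0)).
  rewrite /rsum /= -/(A0 B) (setUidPl _ : A0 B = B) ?sub1set //.
  exact: (subsetP (period_sumsetr _ _)).
- exact: gn0.
Qed.

End Concrete.

End Kneser.

Lemma diam_finbT m (A : {set 'Z_m}) n : rsum A n = setT -> diam_finb A.
Proof.
move=> H; rewrite /diam_finb; case: excluded_middle_informative => // nD.
by exfalso; apply: nD; exists n.
Qed.

Lemma diam_finbE m (A : {set 'Z_m}) : diam_finb A -> exists n, rsum A n = setT.
Proof. by rewrite /diam_finb; case: excluded_middle_informative. Qed.

Theorem theorem2p5 (m rho : nat) (h2 : 2 <= rho) (hm : rho <= m - 1) :
  t_rho m rho = (m - 2) %/ (rho - 1) + 1 /\
  s_rho m rho =
    \max_(d < m.+1 | (d %| m) && (rho + 1 <= d)) (m %/ d * ((d - 2) %/ (rho - 1) + 1)).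
Proof.
have [h Eh] : exists h, rho = h.+1 by exists rho.-1; rewrite prednK // (ltn_trans _ h2).
subst rho; rewrite subn1 /=.
have h0 : 0 < h by [].
have m1 : 1 < m by ssrlia.
have hm' : h.+2 <= m by ssrlia.
split.
  rewrite /t_rho; apply/eqP; rewrite eqn_leq; apply/andP; split.
    by apply/bigmax_leqP => B /and3P[aB mB _]; exact: (t_upper h0 m1 mB aB).
  have [B /andP[cB le]] := t_lower m1 h0 hm'.
  by apply: leq_trans le _; apply: leq_bigmax_cond.
rewrite /s_rho; apply/eqP; rewrite eqn_leq; apply/andP; split.
  apply/bigmax_leqP => A /andP[dA /diam_finbE fA].
  have [d [dm hd dle bd]] := s_upper h0 m1 dA fA.
  have dl : d < m.+1 by rewrite ltnS.
  apply: leq_trans bd _.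
  by apply: (leq_bigmax_cond (Ordinal dl)); rewrite /= dm addn1.
apply/bigmax_leqP => [[d dl]] /= /andP[dm]; rewrite addn1 => hd.
set k := (d - 2) %/ h + 1.
have d1 : 1 < d by ssrlia.
have k1 : 1 < k by rewrite /k addn1 ltnS leq_divRL // mul1n; ssrlia.
have dle : d <= m by rewrite -ltnS.
have cA : diam_ge (Ad m d k) h.+1 && diam_finb (Ad m d k).
  rewrite (Ad_diam m1 h0 dm hd dle) //=.
  exact: (diam_finbT (Ad_fin m1 d1 k1)).
have kd : k <= d by rewrite /k; have := leq_div (d - 2) h => ?; ssrlia.
rewrite -/k -(@Ad_card m m1 d k) //; last by ssrlia.
by apply: leq_bigmax_cond.
Qed.
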